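(* Let $\phi_n(x)=\sqrt{\tfrac{2n+1}{2}}\,P_n(x)$, $n\ge0$, be the orthonormal Legendre polynomials on $[-1,1]$, and consider separated Robin boundary conditions $a_+u(1)+b_+u'(1)=0$ and $a_-u(-1)+b_-u'(-1)=0$ with real constants satisfying $a_+b_+>0$ and $a_-b_-<0$. Set $b_{0,n}=a_+\phi_n(1)+b_+\phi_n'(1)$ and $b_{1,n}=a_-\phi_n(-1)+b_-\phi_n'(-1)$. Then there is a unique unit lower-triangular matrix $A=(a_{m,k})_{m,k\ge0}$ with lower bandwidth $2$ satisfying $b_{i,k}+b_{i,k+1}a_{k+1,k}+b_{i,k+2}a_{k+2,k}=0$ for $i=0,1$ and all $k\ge0$, and $A$ is a bounded operator on $\ell^2$.
   Context: $P_n$ is the Legendre polynomial of degree $n$ with the standard normalization $P_n(1)=1$. ''Unit lower-triangular with lower bandwidth 2'' means $a_{k,k}=1$ and $a_{m,k}=0$ unless $k\le m\le k+2$. $\ell^2$ is the space of square-summable sequences indexed from $0$. *)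

(* Defs.v *)
From Stdlib Require Import Reals Lra Lia.
Open Scope R_scope.

(* leg_pair n x = (P_n(x), P_{n+1}(x)) via Bonnet's recurrence
   (k+1) P_{k+1} = (2k+1) x P_k - k P_{k-1}, P_0 = 1, P_1 = x. *)
Fixpoint leg_pair (n : nat) (x : R) : R * R :=
  match n with
  | O => (1, x)
  | S n' => let (p, q) := leg_pair n' x in
            (q, ((2 * INR n' + 3) * x * q - (INR n' + 1) * p) / (INR n' + 2))
  end.

Definition legendre (n : nat) (x : R) : R := fst (leg_pair n x).

Definition phi (n : nat) (x : R) : R := sqrt ((2 * INR n + 1) / 2) * legendre n x.

Definition unit_lower_band2 (A : nat -> nat -> R) : Prop :=
  forall m k : nat, (m = k -> A m k = 1) /\ ((m < k \/ k + 2 < m)%nat -> A m k = 0).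

Definition lt_apply (A : nat -> nat -> R) (x : nat -> R) (m : nat) : R :=
  sum_f_R0 (fun k => A m k * x k) m.

Definition l2_bounded (A : nat -> nat -> R) : Prop :=
  exists C : R, forall (x : nat -> R) (s : R),
    infinite_sum (fun k => x k ^ 2) s ->
    exists t : R, infinite_sum (fun m => (lt_apply A x m) ^ 2) t /\ t <= C * s.

(* Main.v *)
Require Import Defs.
From Stdlib Require Import Reals Lra Lia FunctionalExtensionality.

Lemma leg_S n x : legendre (S n) x = snd (leg_pair n x).
Proof. unfold legendre; simpl. destruct (leg_pair n x); reflexivity. Qed.

Lemma leg_SS n x : legendre (S (S n)) x =
  ((2 * INR n + 3) * x * legendre (S n) x - (INR n + 1) * legendre n x) / (INR n + 2).
Proof.
  rewrite leg_S, leg_S. unfold legendre. simpl. destruct (leg_pair n x); reflexivity.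
Qed.

Fixpoint dleg (n : nat) (x : R) : R :=
  match n with
  | O => 0
  | S m => match m with
           | O => 1
           | S k => ((2 * INR k + 3) * (legendre (S k) x + x * dleg m x) - (INR k + 1) * dleg k x) / (INR k + 2)
           end
  end.

Lemma INR_p2 n : INR n + 2 <> 0.
Proof. pose proof (pos_INR n). lra. Qed.

Lemma dleg_ok n : (forall x, derivable_pt_lim (legendre n) x (dleg n x)) /\
                  (forall x, derivable_pt_lim (legendre (S n)) x (dleg (S n) x)).
Proof.
  induction n as [|n [IH1 IH2]].
  - split; intro x.
    + replace (legendre 0) with (fct_cte 1) by (apply functional_extensionality; reflexivity).
      apply derivable_pt_lim_const.
    + replace (legendre 1) with id by (apply functional_extensionality; reflexivity).
      apply derivable_pt_lim_id.
  - split; [exact IH2|]. intro x.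
    replace (legendre (S (S n))) with
      (mult_real_fct (/ (INR n + 2))
        (mult_real_fct (2 * INR n + 3) (id * legendre (S n)) - mult_real_fct (INR n + 1) (legendre n)))%F.
    2:{ apply functional_extensionality; intro y. rewrite leg_SS.
        unfold mult_real_fct, minus_fct, mult_fct, id. field. apply INR_p2. }
    replace (dleg (S (S n)) x) with
      (/ (INR n + 2) * ((2 * INR n + 3) * (1 * legendre (S n) x + id x * dleg (S n) x) - (INR n + 1) * dleg n x)).
    2:{ simpl dleg. unfold id. field. apply INR_p2. }
    apply derivable_pt_lim_scal. apply derivable_pt_lim_minus.
    + apply derivable_pt_lim_scal. apply derivable_pt_lim_mult; auto. apply derivable_pt_lim_id.
    + apply derivable_pt_lim_scal. auto.
Qed.

Definition cc (n : nat) : R := INR n * (INR n + 1) / 2.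

Lemma leg_vals n : legendre n 1 = 1 /\ legendre (S n) 1 = 1 /\
  legendre n (-1) = (-1)^n /\ legendre (S n) (-1) = (-1)^(S n) /\
  dleg n 1 = cc n /\ dleg (S n) 1 = cc (S n) /\
  dleg n (-1) = - (-1)^n * cc n /\ dleg (S n) (-1) = - (-1)^(S n) * cc (S n).
Proof.
  induction n as [|n IH].
  - unfold cc; simpl; repeat split; unfold legendre; simpl; field.
  - destruct IH as (H1 & H2 & H3 & H4 & H5 & H6 & H7 & H8).
    repeat split; auto.
    + rewrite leg_SS, H1, H2. field. apply INR_p2.
    + rewrite leg_SS, H3, H4. simpl pow. field. apply INR_p2.
    + change (dleg (S (S n)) 1) with
        (((2 * INR n + 3) * (legendre (S n) 1 + 1 * dleg (S n) 1) - (INR n + 1) * dleg n 1) / (INR n + 2)).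
      rewrite H2, H5, H6. unfold cc. rewrite !S_INR. field. apply INR_p2.
    + change (dleg (S (S n)) (-1)) with
        (((2 * INR n + 3) * (legendre (S n) (-1) + (-1) * dleg (S n) (-1)) - (INR n + 1) * dleg n (-1)) / (INR n + 2)).
      rewrite H4, H7, H8. unfold cc. rewrite !S_INR. simpl pow. field. apply INR_p2.
Qed.

Lemma sum_last f n : (forall k, (k < n)%nat -> f k = 0) -> sum_f_R0 f n = f n.
Proof.
  intro H. destruct n as [|n]; [reflexivity|]. simpl.
  rewrite sum_eq_R0; [ring|]. intros k Hk. apply H. lia.
Qed.

Lemma sq_le a x : Rabs a <= 1 -> (a * x)^2 <= x^2.
Proof.
  intro H. assert (a^2 <= 1).
  { rewrite <- (pow2_abs a). pose proof (Rabs_pos a). nra. }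
  assert (0 <= x^2) by nra. nra.
Qed.

Lemma sq3 a b c : (a + b + c)^2 <= 3 * (a^2 + b^2 + c^2).
Proof. pose proof (pow2_ge_0 (a-b)); pose proof (pow2_ge_0 (b-c)); pose proof (pow2_ge_0 (a-c)); nra. Qed.

Definition xs1 (x : nat -> R) (m : nat) : R := match m with O => 0 | S j => x j end.
Definition xs2 (x : nat -> R) (m : nat) : R := match m with O => 0 | S O => 0 | S (S j) => x j end.

Lemma sum_xs1 x N : sum_f_R0 (fun m => xs1 x m ^ 2) (S N) = sum_f_R0 (fun m => x m ^ 2) N.
Proof. induction N as [|N IH]; simpl in *. ring. rewrite IH. ring. Qed.

Lemma sum_xs2 x N : sum_f_R0 (fun m => xs2 x m ^ 2) (S (S N)) = sum_f_R0 (fun m => x m ^ 2) N.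
Proof. induction N as [|N IH]; simpl in *. ring. rewrite IH. ring. Qed.

Lemma sum_mono f N M : (forall k, 0 <= f k) -> (N <= M)%nat -> sum_f_R0 f N <= sum_f_R0 f M.
Proof.
  intros Hf H. induction H. lra. simpl. specialize (Hf (S m)). lra.
Qed.

Lemma sum_le f g N : (forall k, f k <= g k) -> sum_f_R0 f N <= sum_f_R0 g N.
Proof. intro H. induction N; simpl; auto. specialize (H (S N)). lra. Qed.

Lemma pt_bound A x m : unit_lower_band2 A -> (forall m k, Rabs (A m k) <= 1) ->
  (lt_apply A x m)^2 <= 3 * (x m ^ 2 + xs1 x m ^ 2 + xs2 x m ^ 2).
Proof.
  intros HU HB. unfold lt_apply.
  destruct m as [|[|j]].
  - simpl. rewrite (proj1 (HU 0%nat 0%nat)) by reflexivity. nra.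
  - simpl. rewrite (proj1 (HU 1%nat 1%nat)) by reflexivity.
    pose proof (sq_le (A 1%nat 0%nat) (x 0%nat) (HB _ _)). nra.
  - change (sum_f_R0 (fun k => A (S (S j)) k * x k) (S (S j))) with
      (sum_f_R0 (fun k => A (S (S j)) k * x k) j + A (S (S j)) (S j) * x (S j)
         + A (S (S j)) (S (S j)) * x (S (S j))).
    rewrite sum_last.
    2:{ intros k Hk. rewrite (proj2 (HU (S (S j)) k)) by lia. ring. }
    rewrite (proj1 (HU (S (S j)) (S (S j)))) by reflexivity. simpl xs1; simpl xs2.
    pose proof (sq_le (A (S (S j)) j) (x j) (HB _ _)).
    pose proof (sq_le (A (S (S j)) (S j)) (x (S j)) (HB _ _)).
    pose proof (sq3 (A (S (S j)) j * x j) (A (S (S j)) (S j) * x (S j)) (1 * x (S (S j)))).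
    nra.
Qed.

Lemma l2_ok A : unit_lower_band2 A -> (forall m k, Rabs (A m k) <= 1) -> l2_bounded A.
Proof.
  intros HU HB. exists 9. intros x s Hs.
  set (T := fun N => sum_f_R0 (fun m => lt_apply A x m ^ 2) N).
  assert (Hx : forall N, sum_f_R0 (fun m => x m ^ 2) N <= s).
  { intro N. apply sum_incr; [exact Hs|]. intro; apply pow2_ge_0. }
  assert (HT : forall N, T N <= 9 * s).
  { intro N. unfold T.
    apply Rle_trans with (sum_f_R0 (fun m => (x m ^ 2 + xs1 x m ^ 2 + xs2 x m ^ 2) * 3) N).
    { apply sum_le. intro. rewrite Rmult_comm. apply pt_bound; auto. }
    rewrite <- scal_sum. rewrite !sum_plus.
    assert (sum_f_R0 (fun m => xs1 x m ^ 2) N <= s).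
    { rewrite <- (Hx N), <- (sum_xs1 x N). apply sum_mono; [intro; apply pow2_ge_0|lia]. }
    assert (sum_f_R0 (fun m => xs2 x m ^ 2) N <= s).
    { rewrite <- (Hx N), <- (sum_xs2 x N). apply sum_mono; [intro; apply pow2_ge_0|lia]. }
    specialize (Hx N). lra. }
  assert (Hg : Un_growing T).
  { intro n. unfold T. simpl. pose proof (pow2_ge_0 (lt_apply A x (S n))). lra. }
  destruct (growing_cv T Hg) as [t Ht].
  { exists (9 * s). intros y [i ->]. apply HT. }
  exists t. split; [exact Ht|].
  apply (Rle_cv_lim (Un:=T) (Vn:=fun _ => 9 * s)); auto.
  intros eps He. exists 0%nat. intros. unfold Rdist. rewrite Rminus_diag, Rabs_R0. lra.
Qed.

Definition XX (U0 U1 U2 V0 V1 V2 : R) := (U2 * V0 - U0 * V2) / (U1 * V2 + U2 * V1).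
Definition YY (U0 U1 U2 V0 V1 V2 : R) := - (U1 * V0 + U0 * V1) / (U1 * V2 + U2 * V1).

Lemma sys_all (U0 U1 U2 V0 V1 V2 : R) :
  0 < U0 -> 0 < U1 -> 0 < U2 -> 0 < V0 -> 0 < V1 -> 0 < V2 ->
  (U0 + U1 * XX U0 U1 U2 V0 V1 V2 + U2 * YY U0 U1 U2 V0 V1 V2 = 0 /\
   V0 - V1 * XX U0 U1 U2 V0 V1 V2 + V2 * YY U0 U1 U2 V0 V1 V2 = 0) /\
  (forall x y, U0 + U1 * x + U2 * y = 0 -> V0 - V1 * x + V2 * y = 0 ->
     x = XX U0 U1 U2 V0 V1 V2 /\ y = YY U0 U1 U2 V0 V1 V2) /\
  (U0 <= U1 -> U1 <= U2 -> V0 <= V1 -> V1 <= V2 ->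
     Rabs (XX U0 U1 U2 V0 V1 V2) <= 1 /\ Rabs (YY U0 U1 U2 V0 V1 V2) <= 1).
Proof.
  intros pU0 pU1 pU2 pV0 pV1 pV2.
  assert (Dpos : 0 < U1 * V2 + U2 * V1) by nra.
  unfold XX, YY. split; [|split].
  - split; field; lra.
  - intros x y E0 E1.
    assert (Hx : x * (U1 * V2 + U2 * V1) = U2 * V0 - U0 * V2).
    { replace (x * (U1 * V2 + U2 * V1)) with (V2 * (U0 + U1 * x + U2 * y) - U2 * (V0 - V1 * x + V2 * y) + (U2 * V0 - U0 * V2)) by ring.
      rewrite E0, E1. ring. }
    assert (Hy : y * (U1 * V2 + U2 * V1) = - (U1 * V0 + U0 * V1)).
    { replace (y * (U1 * V2 + U2 * V1)) with (V1 * (U0 + U1 * x + U2 * y) + U1 * (V0 - V1 * x + V2 * y) - (U1 * V0 + U0 * V1)) by ring.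
      rewrite E0, E1. ring. }
    split; [rewrite <- Hx | rewrite <- Hy]; field; lra.
  - intros a b c d.
    split; apply Rabs_le; split;
    (apply (Rmult_le_reg_r (U1 * V2 + U2 * V1)); [lra|]);
    unfold Rdiv; rewrite Rmult_assoc, Rinv_l by lra; nra.
Qed.

Theorem mainTheorem2 (ap bp am bm : R) (dp dm : nat -> R) :
  ap * bp > 0 -> am * bm < 0 ->
  (forall n, derivable_pt_lim (phi n) 1 (dp n)) ->
  (forall n, derivable_pt_lim (phi n) (-1) (dm n)) ->
  let b0 := fun n => ap * phi n 1 + bp * dp n in
  let b1 := fun n => am * phi n (-1) + bm * dm n in
  exists A : nat -> nat -> R,
    (unit_lower_band2 A /\
     (forall k : nat,
        b0 k + b0 (S k) * A (S k) k + b0 (S (S k)) * A (S (S k)) k = 0 /\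
        b1 k + b1 (S k) * A (S k) k + b1 (S (S k)) * A (S (S k)) k = 0)) /\
    (forall A' : nat -> nat -> R,
       (unit_lower_band2 A' /\
        (forall k : nat,
           b0 k + b0 (S k) * A' (S k) k + b0 (S (S k)) * A' (S (S k)) k = 0 /\
           b1 k + b1 (S k) * A' (S k) k + b1 (S (S k)) * A' (S (S k)) k = 0)) ->
       A' = A) /\
    l2_bounded A.
Proof.
  intros Hab Hmb Hdp Hdm b0 b1.
  assert (Hap : ap <> 0) by (intro; subst; lra).
  assert (Ham : am <> 0) by (intro; subst; lra).
  pose (s := fun n => sqrt ((2 * INR n + 1) / 2)).
  assert (Hs : forall n, 0 < s n).
  { intro n. unfold s. apply sqrt_lt_R0. pose proof (pos_INR n). lra. }
  assert (Hsm : forall n, s n <= s (S n)).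
  { intro n. unfold s. apply sqrt_le_1_alt. rewrite S_INR. lra. }
  assert (Hc : forall n, 0 <= cc n).
  { intro n. unfold cc. pose proof (pos_INR n). nra. }
  assert (Hcm : forall n, cc n <= cc (S n)).
  { intro n. unfold cc. rewrite S_INR. pose proof (pos_INR n). nra. }
  assert (Hdpv : forall n, dp n = s n * cc n).
  { intro n. pose proof (derivable_pt_lim_scal _ (s n) 1 _ (proj1 (dleg_ok n) 1)) as H.
    change (mult_real_fct (s n) (legendre n)) with (phi n) in H.
    rewrite (uniqueness_limite _ _ _ _ (Hdp n) H).
    destruct (leg_vals n) as (_ & _ & _ & _ & E & _). rewrite E. reflexivity. }
  assert (Hdmv : forall n, dm n = s n * (- (-1)^n * cc n)).
  { intro n. pose proof (derivable_pt_lim_scal _ (s n) (-1) _ (proj1 (dleg_ok n) (-1))) as H.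
    change (mult_real_fct (s n) (legendre n)) with (phi n) in H.
    rewrite (uniqueness_limite _ _ _ _ (Hdm n) H).
    destruct (leg_vals n) as (_ & _ & _ & _ & _ & _ & E & _). rewrite E. reflexivity. }
  pose (U := fun n => s n * (ap * ap + ap * bp * cc n)).
  pose (V := fun n => s n * (am * am - am * bm * cc n)).
  assert (Hb0 : forall n, b0 n = U n / ap).
  { intro n. unfold b0, U, phi. destruct (leg_vals n) as (E & _). rewrite E, Hdpv.
    fold (s n). field. exact Hap. }
  assert (Hb1 : forall n, b1 n = (-1)^n * V n / am).
  { intro n. unfold b1, V, phi. destruct (leg_vals n) as (_ & _ & E & _). rewrite E, Hdmv.
    fold (s n). field. exact Ham. }
  assert (HU : forall n, 0 < U n).
  { intro n. unfold U. specialize (Hs n). specialize (Hc n). apply Rmult_lt_0_compat; [lra|].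
    assert (0 < ap * ap) by (apply Rsqr_pos_lt; exact Hap). nra. }
  assert (HV : forall n, 0 < V n).
  { intro n. unfold V. specialize (Hs n). specialize (Hc n). apply Rmult_lt_0_compat; [lra|].
    assert (0 < am * am) by (apply Rsqr_pos_lt; exact Ham). nra. }
  assert (HUm : forall n, U n <= U (S n)).
  { intro n. unfold U. specialize (Hs n). specialize (Hsm n). specialize (Hc n). specialize (Hcm n).
    assert (0 < ap * ap) by (apply Rsqr_pos_lt; exact Hap).
    apply Rmult_le_compat; nra. }
  assert (HVm : forall n, V n <= V (S n)).
  { intro n. unfold V. specialize (Hs n). specialize (Hsm n). specialize (Hc n). specialize (Hcm n).
    assert (0 < am * am) by (apply Rsqr_pos_lt; exact Ham).
    apply Rmult_le_compat; nra. }
  pose (X := fun k => XX (U k) (U (S k)) (U (S (S k))) (V k) (V (S k)) (V (S (S k)))).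
  pose (Y := fun k => YY (U k) (U (S k)) (U (S (S k))) (V k) (V (S k)) (V (S (S k)))).
  assert (Hsys : forall k, _) by (intro k; exact (sys_all (U k) (U (S k)) (U (S (S k))) (V k) (V (S k)) (V (S (S k)))
      (HU _) (HU _) (HU _) (HV _) (HV _) (HV _))).
  pose (A := fun m k => if Nat.eqb m k then 1 else if Nat.eqb m (S k) then X k
                        else if Nat.eqb m (S (S k)) then Y k else 0).
  assert (HA1 : forall k, A (S k) k = X k).
  { intro k. unfold A. rewrite (proj2 (Nat.eqb_neq (S k) k)) by lia. rewrite Nat.eqb_refl. reflexivity. }
  assert (HA2 : forall k, A (S (S k)) k = Y k).
  { intro k. unfold A. rewrite (proj2 (Nat.eqb_neq (S (S k)) k)) by lia.
    rewrite (proj2 (Nat.eqb_neq (S (S k)) (S k))) by lia. rewrite Nat.eqb_refl. reflexivity. }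
  assert (Hpm : forall k, (-1)^k * (-1)^k = 1).
  { intro k. rewrite <- Rpow_mult_distr. replace (-1 * -1) with 1 by ring. apply pow1. }
  assert (Heq0 : forall k x y, b0 k + b0 (S k) * x + b0 (S (S k)) * y = (U k + U (S k) * x + U (S (S k)) * y) / ap).
  { intros. rewrite !Hb0. field. exact Hap. }
  assert (Heq1 : forall k x y, b1 k + b1 (S k) * x + b1 (S (S k)) * y = (-1)^k * (V k - V (S k) * x + V (S (S k)) * y) / am).
  { intros. rewrite !Hb1. simpl pow. field. exact Ham. }
  assert (HUL : unit_lower_band2 A).
  { intros m k. split; intro H.
    - subst. unfold A. rewrite Nat.eqb_refl. reflexivity.
    - unfold A. rewrite (proj2 (Nat.eqb_neq m k)) by lia.
      rewrite (proj2 (Nat.eqb_neq m (S k))) by lia.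
      rewrite (proj2 (Nat.eqb_neq m (S (S k)))) by lia. reflexivity. }
  exists A. split; [split|split].
  - exact HUL.
  - intro k. rewrite HA1, HA2, Heq0, Heq1.
    destruct (Hsys k) as [[E0 E1] _]. fold (X k) (Y k) in E0, E1.
    rewrite E0, E1. unfold Rdiv. split; ring.
  - intros A' [HU' HE']. apply functional_extensionality; intro m.
    apply functional_extensionality; intro k.
    destruct (HE' k) as [E0 E1]. rewrite Heq0 in E0. rewrite Heq1 in E1.
    assert (F0 : U k + U (S k) * A' (S k) k + U (S (S k)) * A' (S (S k)) k = 0).
    { apply (Rmult_eq_reg_l (/ ap)). rewrite Rmult_0_r, <- E0. unfold Rdiv. ring.
      apply Rinv_neq_0_compat; exact Hap. }
    assert (F1 : V k - V (S k) * A' (S k) k + V (S (S k)) * A' (S (S k)) k = 0).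
    { transitivity (am * (-1)^k * ((-1) ^ k * (V k - V (S k) * A' (S k) k + V (S (S k)) * A' (S (S k)) k) / am)).
      - rewrite <- (Rmult_1_l (V k - _ + _)) at 1. rewrite <- (Hpm k). field. exact Ham.
      - rewrite E1. ring. }
    destruct (Hsys k) as [_ [Hu _]]. destruct (Hu _ _ F0 F1) as [Ex Ey].
    destruct (Compare_dec.lt_eq_lt_dec m k) as [[Hlt|Heq]|Hgt].
    + rewrite (proj2 (HU' m k)) by lia. rewrite (proj2 (HUL m k)) by lia. reflexivity.
    + rewrite (proj1 (HU' m k)) by lia. rewrite (proj1 (HUL m k)) by lia. reflexivity.
    + destruct (Nat.eq_dec m (S k)) as [->|N1]; [rewrite HA1; exact Ex|].
      destruct (Nat.eq_dec m (S (S k))) as [->|N2]; [rewrite HA2; exact Ey|].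
      rewrite (proj2 (HU' m k)) by lia. rewrite (proj2 (HUL m k)) by lia. reflexivity.
  - apply l2_ok; [exact HUL|]. intros m k. unfold A.
    destruct (Hsys k) as [_ [_ Hb]].
    destruct (Hb (HUm _) (HUm _) (HVm _) (HVm _)) as [Bx By].
    destruct (Nat.eqb m k); [rewrite Rabs_R1; lra|].
    destruct (Nat.eqb m (S k)); [exact Bx|].
    destruct (Nat.eqb m (S (S k))); [exact By|].
    rewrite Rabs_R0; lra.
Qed.
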